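(* Consider two agents with combination matrix $A=\begin{bmatrix}a&1-a\\1-a&a\end{bmatrix}$, $a\in(0,1)$, so $p=[0.5;0.5]$, $P=0.5I_2$. Let $\overline{A}=(I_2+A)/2$, let $(P-AP)/2=U\Sigma U^{\mathsf{T}}$ be an eigendecomposition and $V=U\Sigma^{1/2}U^{\mathsf{T}}$. For step-size $\mu$ and $\sigma^2>0$, define $Q_d=\begin{bmatrix}(1-\mu\sigma^2)\overline{A} & -2V\\ (1-\mu\sigma^2)V\overline{A} & \overline{A}\end{bmatrix}\in\mathbb{R}^{4\times4}$. Then $Q_d$ admits the decomposition $Q_d=X\overline{Q}_dX^{-1}$ with $\overline{Q}_d=\begin{bmatrix}1&0\\0&E_d\end{bmatrix}$, $E_d=\begin{bmatrix}1-\mu\sigma^2&0&0\\0&(1-\mu\sigma^2)a&-\sqrt{2-2a}\\0&(1-\mu\sigma^2)a\sqrt{\frac{1-a}{2}}&a\end{bmatrix}$, and $X=[r\ \ X_R]$, $X^{-1}=\begin{bmatrix}\ell^{\mathsf{T}}\\ X_L\end{bmatrix}$ with $X_R\in\mathbb{R}^{4\times3}$, $X_L\in\mathbb{R}^{3\times4}$, $r=\frac12\begin{bmatrix}0\\ \mathds{1}_2\end{bmatrix}\in\mathbb{R}^4$, $\ell=\begin{bmatrix}0\\ \mathds{1}_2\end{bmatrix}\in\mathbb{R}^4$ (here $0\in\mathbb{R}^2$).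
   Context: Analytical two-agent mean-square-error example: costs $\frac12(w^{\mathsf{T}}R_{u,k}w-2r_{du,k}^{\mathsf{T}}w)$ with $R_{u,1}=R_{u,2}=\sigma^2I_M$, same step-size $\mu$; the exact diffusion error recursion is $\widetilde{z}_i=(Q_d\otimes I_M)\widetilde{z}_{i-1}$. *)

(* Defs.v *)
From HB Require Import structures.
From mathcomp Require Import all_boot all_order all_algebra.
Set Implicit Arguments. Unset Strict Implicit. Unset Printing Implicit Defensive.
Import Order.TTheory GRing.Theory Num.Theory.
Local Open Scope ring_scope.

Definition Acomb (R : ringType) (a : R) : 'M[R]_2 :=
  \matrix_(i < 2, j < 2) (if i == j then a else 1 - a).

Definition Pmat (R : fieldType) : 'M[R]_2 := (2^-1 : R)%:M.

Definition Abar (R : fieldType) (a : R) : 'M[R]_2 :=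
  (2^-1 : R) *: (1%:M + Acomb a).

Definition Vmat (R : rcfType) (U : 'M[R]_2) (s : 'rV[R]_2) : 'M[R]_2 :=
  U *m diag_mx (map_mx Num.sqrt s) *m U^T.

Definition Qd (R : rcfType) (a mu sigma2 : R) (V : 'M[R]_2) : 'M[R]_4 :=
  block_mx ((1 - mu * sigma2) *: Abar a) (- (2%:R *: V))
           ((1 - mu * sigma2) *: (V *m Abar a)) (Abar a).

Definition Ed (R : rcfType) (a mu sigma2 : R) : 'M[R]_3 :=
  \matrix_(i < 3, j < 3)
    match nat_of_ord i, nat_of_ord j with
    | 0, 0 => 1 - mu * sigma2
    | 1, 1 => (1 - mu * sigma2) * a
    | 1, 2 => - Num.sqrt (2%:R - 2%:R * a)
    | 2, 1 => (1 - mu * sigma2) * a * Num.sqrt ((1 - a) / 2%:R)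
    | 2, 2 => a
    | _, _ => 0
    end.

Definition Qbar (R : rcfType) (a mu sigma2 : R) : 'M[R]_4 :=
  block_mx (1%:M : 'M[R]_1) 0 0 (Ed a mu sigma2).

Definition rvec (R : fieldType) : 'cV[R]_4 :=
  (2^-1 : R) *: col_mx (0 : 'cV[R]_2) (const_mx 1).
Definition lvec (R : fieldType) : 'cV[R]_4 :=
  col_mx (0 : 'cV[R]_2) (const_mx 1).

(* Main.v *)
Require Import Defs.
From HB Require Import structures.
From mathcomp Require Import all_boot all_order all_algebra.
From mathcomp Require Import ring lra.
Import Order.TTheory GRing.Theory Num.Theory.
Local Open Scope ring_scope.
Set Implicit Arguments. Unset Strict Implicit.
Section S.
Variable R : rcfType.
Definition mk n (f : nat -> nat -> R) : 'M[R]_n := \matrix_(i < n, j < n) f i j.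
Lemma mk_mul2 f g : mk 2 f *m mk 2 g = mk 2 (fun i j => f i 0%N * g 0%N j + f i 1%N * g 1%N j).
Proof. apply/matrixP => i j; rewrite !mxE !big_ord_recl big_ord0 !mxE /= addr0. done. Qed.
Lemma mk_mul4 f g : mk 4 f *m mk 4 g = mk 4 (fun i j => f i 0%N * g 0%N j + f i 1%N * g 1%N j + f i 2%N * g 2%N j + f i 3%N * g 3%N j).
Proof. apply/matrixP => i j; rewrite !mxE !big_ord_recl big_ord0 !mxE /= addr0 !addrA. done. Qed.
Lemma mk_eq n f g : (forall i j, (i < n)%N -> (j < n)%N -> f i j = g i j) -> mk n f = mk n g.
Proof. move=> H; apply/matrixP => i j; rewrite !mxE; exact: H. Qed.
Lemma mk_inj n f g i j : mk n f = mk n g -> (i < n)%N -> (j < n)%N -> f i j = g i j.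
Proof. move=> /matrixP H hi hj; move: (H (Ordinal hi) (Ordinal hj)); rewrite !mxE. done. Qed.
Lemma mk_scale n c f : c *: mk n f = mk n (fun i j => c * f i j).
Proof. by apply/matrixP => i j; rewrite !mxE. Qed.
Lemma mk_opp n f : - mk n f = mk n (fun i j => - f i j).
Proof. by apply/matrixP => i j; rewrite !mxE. Qed.
Lemma mk_add n f g : mk n f + mk n g = mk n (fun i j => f i j + g i j).
Proof. by apply/matrixP => i j; rewrite !mxE. Qed.
Lemma mk_scalar n c : (c%:M : 'M[R]_n) = mk n (fun i j => c * (i == j)%:R).
Proof. by apply/matrixP => i j; rewrite !mxE mulr_natr. Qed.
Lemma mk_block22 f11 f12 f21 f22 : block_mx (mk 2 f11) (mk 2 f12) (mk 2 f21) (mk 2 f22) =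
  mk 4 (fun i j => if (i < 2)%N then (if (j < 2)%N then f11 i j else f12 i (j - 2)%N)
     else (if (j < 2)%N then f21 (i - 2)%N j else f22 (i - 2)%N (j - 2)%N)).
Proof.
apply/matrixP=> i j; rewrite !mxE; case: (splitP i) => i' hi; rewrite !mxE; case: (splitP j) => j' hj; rewrite !mxE hi hj /= ?ltn_ord ?addKn //.
Qed.
Lemma mk_block13 f : block_mx (1%:M : 'M[R]_1) 0 0 (mk 3 f) =
  mk 4 (fun i j => if i == 0%N then (j == 0%N)%:R else if j == 0%N then 0 else f i.-1 j.-1).
Proof.
apply/matrixP=> i j; rewrite !mxE; case: (splitP i) => i' hi; rewrite !mxE; case: (splitP j) => j' hj; rewrite !mxE hi hj /=.
- by rewrite !ord1.
- by rewrite ord1.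
- by rewrite ord1.
- by [].
Qed.
Lemma mk_tr n f : (mk n f)^T = mk n (fun i j => f j i).
Proof. by apply/matrixP => i j; rewrite !mxE. Qed.
Lemma mk_of n (M : 'M[R]_n.+1) : M = mk n.+1 (fun i j => M (inord i) (inord j)).
Proof. by apply/matrixP => i j; rewrite !mxE !inord_val. Qed.
Lemma Acomb_mk (a : R) : Acomb a = mk 2 (fun i j => if i == j then a else 1 - a).
Proof. by apply/matrixP => i j; rewrite !mxE. Qed.
End S.
Arguments mk_inj {R n f g} i j.
Theorem lemma5 (R : rcfType) (a mu sigma2 : R)
  (ha0 : 0 < a) (ha1 : a < 1) (hmu : 0 < mu) (hs : 0 < sigma2)
  (U : 'M[R]_2) (s : 'rV[R]_2)
  (hU : U *m U^T = 1%:M)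
  (hs0 : forall j, 0 <= s ord0 j)
  (heig : (2^-1 : R) *: (Pmat R - Acomb a *m Pmat R) = U *m diag_mx s *m U^T) :
  exists X : 'M[R]_4,
    [/\ X \in unitmx,
        col ord0 X = rvec R,
        row ord0 (invmx X) = (lvec R)^T &
        Qd a mu sigma2 (Vmat U s) = X *m Qbar a mu sigma2 *m invmx X].
Proof.
have hUT : U^T *m U = 1%:M := mulmx1C hU.
have hDD : diag_mx (map_mx Num.sqrt s) *m diag_mx (map_mx Num.sqrt s) = diag_mx s.
  rewrite mulmx_diag; congr diag_mx; apply/rowP => j; rewrite !mxE -expr2 sqr_sqrtr //.
have hVV : Vmat U s *m Vmat U s = U *m diag_mx s *m U^T.
  rewrite /Vmat !mulmxA -(mulmxA _ U^T U) hUT mulmx1 -(mulmxA U _ (diag_mx _)) hDD //.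
have hVT : (Vmat U s)^T = Vmat U s.
  by rewrite /Vmat !trmx_mul trmxK tr_diag_mx mulmxA.
have hVd : forall i, 0 <= Vmat U s i i.
  move=> i; rewrite /Vmat mul_mx_diag !mxE; apply: sumr_ge0 => k _; rewrite !mxE.
  rewrite mulrAC -expr2; apply: mulr_ge0; [exact: sqr_ge0 | exact: sqrtr_ge0].
set V := Vmat U s.
set v := fun i j => V (inord i) (inord j).
have hVmk : V = mk 2 v := mk_of V.
have hM : (2^-1 : R) *: (Pmat R - Acomb a *m Pmat R) = mk 2 (fun i j => if i == j then (1 - a) / 4%:R else - ((1 - a) / 4%:R)).
  rewrite /Pmat Acomb_mk mk_scalar mk_mul2 mk_opp mk_add mk_scale; apply: mk_eq => i j.
  case: i => [|[|//]]; case: j => [|[|//]] _ _ /=; field; done.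
rewrite -hVV -/V hVmk mk_mul2 hM in heig.
have e00 := mk_inj 0 0 heig erefl erefl.
have e01 := mk_inj 0 1 heig erefl erefl.
have e11 := mk_inj 1 1 heig erefl erefl.

have hsym : v 0%N 1%N = v 1%N 0%N.
  by move: hVT; rewrite -/V hVmk mk_tr => /(mk_inj 0 1) /(_ erefl erefl).
have hp : 0 <= v 0%N 0%N := hVd _.
have hr : 0 <= v 1%N 1%N := hVd _.
simpl in e00, e01, e11.
rewrite -hsym in e00 e11.
move: e00 e01 e11 hp hr; set p := v 0%N 0%N; set q := v 0%N 1%N; set r := v 1%N 1%N => e00 e01 e11 hp hr.
have hpr : p = r.
  have : (p - r) * (p + r) = 0 by rewrite mulrDr !mulrBl; lra.
  move/eqP; rewrite mulf_eq0 => /orP [/eqP|/eqP]; lra.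
have hq : q = - p.
  have : (p + q) ^+ 2 = 0 by rewrite -hpr in e01; lra.
  move/eqP; rewrite sqrf_eq0 => /eqP; lra.
set t := Num.sqrt ((1 - a) / 2%:R).
have ht0 : 0 <= t := sqrtr_ge0 _.
have hpt : p = t / 2%:R.
  have h2 : (1 - a) / 2%:R = (2%:R * p) ^+ 2.
    rewrite -hpr hq in e00 e01; rewrite expr2; lra.
  rewrite /t h2 sqrtr_sqr ger0_norm; [field | lra]; done.
have hV : V = mk 2 (fun i j => if i == j then t / 2%:R else - (t / 2%:R)).
  rewrite hVmk; apply: mk_eq => i j.
  case: i => [|[|//]]; case: j => [|[|//]] _ _ /=.
  - exact: hpt.
  - by rewrite -/q hq hpt.
  - by rewrite -hsym -/q hq hpt.
  - by rewrite -/r -hpr hpt.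
have h2t : Num.sqrt (2%:R - 2%:R * a) = 2%:R * t.
  have -> : 2%:R - 2%:R * a = (2%:R * t) ^+ 2.
    rewrite exprMn sqr_sqrtr; [field; done | apply: divr_ge0; lra].
  rewrite sqrtr_sqr ger0_norm //; lra.
pose xf := fun i j : nat => match i, j with
  | 0, 1 => 1 | 0, 2 => 1 | 1, 1 => 1 | 1, 2 => -1
  | 2, 0 => 2%:R^-1 | 2, 3 => 1 | 3, 0 => 2%:R^-1 | 3, 3 => -1
  | _, _ => 0 end : R.
pose yf := fun i j : nat => match i, j with
  | 0, 2 => 1 | 0, 3 => 1 | 1, 0 => 2%:R^-1 | 1, 1 => 2%:R^-1
  | 2, 0 => 2%:R^-1 | 2, 1 => - 2%:R^-1 | 3, 2 => 2%:R^-1 | 3, 3 => - 2%:R^-1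
  | _, _ => 0 end : R.
have hXY : mk 4 xf *m mk 4 yf = 1%:M.
  rewrite mk_mul4 mk_scalar; apply: mk_eq => i j.
  case: i => [|[|[|[|//]]]]; case: j => [|[|[|[|//]]]] _ _ /=; field; done.
have [hXu _] := mulmx1_unit hXY.
have hinv : invmx (mk 4 xf) = mk 4 yf.
  by rewrite -[invmx _]mulmx1 -hXY mulmxA mulVmx // mul1mx.
exists (mk 4 xf); split => //.
- apply/matrixP => i j; rewrite !mxE; case: (@splitP 2 2 i) => k hk; rewrite !mxE hk /=.
  + by case: k hk => [[|[|//]] ?] _ /=; rewrite mulr0.
  + by case: k hk => [[|[|//]] ?] _ /=; rewrite mulr1.
- rewrite hinv; apply/matrixP => i j; rewrite !mxE; case: (@splitP 2 2 j) => k hk; rewrite !mxE hk /=.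
  + by case: k hk => [[|[|//]] ?] _ /=.
  + by case: k hk => [[|[|//]] ?] _ /=.
rewrite hinv /Qd hV /Abar Acomb_mk mk_scalar !(mk_add, mk_scale, mk_mul2, mk_opp) mk_block22.
rewrite /Qbar.
change (Ed a mu sigma2) with (mk 3 (fun m n => match m, n with
    | 0, 0 => 1 - mu * sigma2
    | 1, 1 => (1 - mu * sigma2) * a
    | 1, 2 => - Num.sqrt (2%:R - 2%:R * a)
    | 2, 1 => (1 - mu * sigma2) * a * Num.sqrt ((1 - a) / 2%:R)
    | 2, 2 => a
    | _, _ => 0
    end)).
rewrite mk_block13 !mk_mul4; apply: mk_eq => i j.
case: i => [|[|[|[|//]]]]; case: j => [|[|[|[|//]]]] _ _ /=; rewrite ?h2t -/t; field; done.
Qed.
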